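(* Let $q>0$. For $t>1$, $z\in(-1,1)$ put $K(t,z)=\frac{t^2+2tz+1}{(z+t)^2}$ and $\tilde J(-q,q,t,z)=(z+t)^2\big[K(t,z)^{2/q}-1\big]$. Then for every $t>1$ and $z\in(-1,1)$: $\frac{\partial\tilde J}{\partial t}(-q,q,t,z)<0$ if $0<q<2$, and $\frac{\partial\tilde J}{\partial t}(-q,q,t,z)>0$ if $q>2$. Moreover, for every $r>1$: $\frac{\partial\Theta}{\partial r}(-q,q,r)<0$ if $0<q<2$, and $\frac{\partial\Theta}{\partial r}(-q,q,r)>0$ if $q>2$.
   Context: For $p<q$, $p,q\ne0$, $r>1$, $\Theta(p,q,r)=\int_1^r\Big(\big(\frac{r^p-r^q}{r^p-1}+\frac{r^q-1}{r^p-1}x^p\big)^{2/q}-x^2\Big)^{-1/2}dx$. With $\beta_0=\frac{2q-p}{3}$ and $t=\frac{r^{\beta_0}+1}{r^{\beta_0}-1}$, one has $\Theta(p,q,r)=\int_{-1}^1\frac{dz}{\beta_0\sqrt{\tilde J(p,q,t,z)}}$ (for $p=-q$, $\beta_0=q$). *)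

(* Defs.v *)
From Stdlib Require Import Reals.
From Coquelicot Require Import Coquelicot.
Open Scope R_scope.

Definition Kfun (t z : R) : R := (t ^ 2 + 2 * t * z + 1) / (z + t) ^ 2.

Definition Jtilde_mq (q t z : R) : R :=
  (z + t) ^ 2 * (Rpower (Kfun t z) (2 / q) - 1).

Definition Theta_integrand (p q r x : R) : R :=
  / sqrt (Rpower ((Rpower r p - Rpower r q) / (Rpower r p - 1)
                  + (Rpower r q - 1) / (Rpower r p - 1) * Rpower x p) (2 / q)
          - x ^ 2).

(* Theta(p,q,r) = int_1^r Theta_integrand dx, as an improper Riemann integral
   (the integrand blows up at both endpoints x = 1 and x = r). *)
Definition Theta (p q r : R) : R :=
  RInt_gen (Theta_integrand p q r) (at_right 1) (at_left r).

(* Main.v *)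
Require Import Defs.
From Stdlib Require Import Reals Lra.
From Coquelicot Require Import Coquelicot.
Open Scope R_scope.

Lemma Rpower_m1 y e : 0 < y -> Rpower y (e - 1) = Rpower y e / y.
Proof.
  intros Hy. unfold Rminus. rewrite Rpower_plus, Rpower_Ropp, Rpower_1 by lra.
  reflexivity.
Qed.

Lemma Rpower_gt0 y e : 0 < Rpower y e.
Proof. unfold Rpower; apply exp_pos. Qed.

Lemma is_derive_Rpower e y : 0 < y ->
  is_derive (fun x => Rpower x e) y (e * Rpower y (e - 1)).
Proof.
  intros Hy. rewrite Rpower_m1 by lra. unfold Rpower.
  auto_derive. lra. field. lra.
Qed.

Lemma cont_of_derive f x : ex_derive f x -> continuity_pt f x.
Proof. intros H. apply continuity_pt_filterlim. apply ex_derive_continuous in H. exact H. Qed.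

Lemma loc2d_pos f x y : continuity_2d_pt f x y -> 0 < f x y ->
  locally_2d (fun u v => 0 < f u v) x y.
Proof.
  intros Hc Hp. destruct (Hc (mkposreal _ Hp)) as [d Hd].
  exists d. intros u v Hu Hv. specialize (Hd u v Hu Hv). simpl in Hd.
  apply Rabs_def2 in Hd. lra.
Qed.

Lemma c2d_snd f x y : continuity_2d_pt f x y -> continuous (fun v => f x v) y.
Proof.
  intros Hc. apply continuity_pt_filterlim. intros eps Heps.
  destruct (Hc (mkposreal _ Heps)) as [d Hd]. exists d. split. apply cond_pos. intros v [_ Hv].
  simpl in *. unfold R_dist in *. apply (Hd x v). rewrite Rminus_eq_0, Rabs_R0. apply cond_pos. exact Hv.
Qed.

Lemma c2d_fst f x y : continuity_2d_pt f x y -> continuous (fun u => f u y) x.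
Proof.
  intros Hc. apply continuity_pt_filterlim. intros eps Heps.
  destruct (Hc (mkposreal _ Heps)) as [d Hd]. exists d. split. apply cond_pos. intros v [_ Hv].
  simpl in *. unfold R_dist in *. apply (Hd v y). exact Hv. rewrite Rminus_eq_0, Rabs_R0. apply cond_pos.
Qed.

Lemma pos_1tw t w : 0 <= t <= 1 -> -1 < w -> 0 < 1 + t * w.
Proof. intros. assert (0 <= t * (1 + w)) by (apply Rmult_le_pos; lra).
  destruct (Req_dec t 1). subst. lra. nra. Qed.

Definition Ik (k : nat) (e w : R) := RInt (fun t => t ^ k * Rpower (1 + t * w) e) 0 1.

Lemma Ik_integrand_derive k e u t : 0 < 1 + t * u ->
  is_derive (fun z => t ^ k * Rpower (1 + t * z) e) u (e * (t ^ (S k) * Rpower (1 + t * u) (e - 1))).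
Proof.
  intros H. rewrite Rpower_m1 by lra. unfold Rpower. auto_derive. lra.
  simpl. field. lra.
Qed.

Lemma Ik_integrand_cont k e w t : 0 < 1 + t * w ->
  continuous (fun t => t ^ k * Rpower (1 + t * w) e) t.
Proof.
  intros H. apply (ex_derive_continuous (K:=R_AbsRing) (V:=R_NormedModule)). unfold Rpower. auto_derive. lra.
Qed.

Lemma ex_RInt_Ik k e w : -1 < w -> ex_RInt (fun t => t ^ k * Rpower (1 + t * w) e) 0 1.
Proof.
  intros Hw. apply (ex_RInt_continuous (V:=R_CompleteNormedModule)). intros z Hz.
  rewrite Rmin_left, Rmax_right in Hz by lra.
  apply Ik_integrand_cont. apply pos_1tw; lra.
Qed.

Lemma c2d_Dform k e w t : 0 < 1 + t * w ->
  continuity_2d_pt (fun u v => e * (v ^ (S k) * Rpower (1 + v * u) (e - 1))) w t.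
Proof.
  intros H.
  apply continuity_2d_pt_mult. apply continuity_2d_pt_const.
  apply continuity_2d_pt_mult.
  - apply (continuity_1d_2d_pt_comp (fun y => y ^ (S k)) (fun u v => v)).
    apply cont_of_derive. auto_derive. auto. apply continuity_2d_pt_id2.
  - apply (continuity_1d_2d_pt_comp (fun y => Rpower y (e - 1)) (fun u v => 1 + v * u)).
    apply cont_of_derive. eexists. apply is_derive_Rpower. lra.
    apply continuity_2d_pt_plus. apply continuity_2d_pt_const.
    apply continuity_2d_pt_mult. apply continuity_2d_pt_id2. apply continuity_2d_pt_id1.
Qed.

Lemma Ik_deriv k e w : -1 < w -> is_derive (Ik k e) w (e * Ik (S k) (e - 1) w).
Proof.
  intros Hw. unfold Ik.
  replace (e * RInt (fun t => t ^ S k * Rpower (1 + t * w) (e - 1)) 0 1)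
    with (RInt (fun t => Derive (fun u => t ^ k * Rpower (1 + t * u) e) w) 0 1).
  - apply (is_derive_RInt_param (fun u t => t ^ k * Rpower (1 + t * u) e)).
    + assert (Ho : open (fun u => -1 < u)) by apply open_gt.
      apply (filter_imp (fun u => -1 < u)). 2: now apply Ho.
      intros u Hu t Ht. rewrite Rmin_left, Rmax_right in Ht by lra.
      eexists. apply Ik_integrand_derive. apply pos_1tw; lra.
    + intros t Ht. rewrite Rmin_left, Rmax_right in Ht by lra.
      assert (Hp : 0 < 1 + t * w) by (apply pos_1tw; lra).
      apply (continuity_2d_pt_ext_loc (fun u v => e * (v ^ (S k) * Rpower (1 + v * u) (e - 1)))).
      2: now apply c2d_Dform.
      assert (Hc : continuity_2d_pt (fun u v => 1 + v * u) w t).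
      { apply continuity_2d_pt_plus. apply continuity_2d_pt_const.
        apply continuity_2d_pt_mult. apply continuity_2d_pt_id2. apply continuity_2d_pt_id1. }
      destruct (loc2d_pos _ _ _ Hc Hp) as [d Hd]. exists d. intros u v Hu Hv.
      symmetry. apply is_derive_unique. apply Ik_integrand_derive. now apply Hd.
    + assert (Ho : open (fun u => -1 < u)) by apply open_gt.
      apply (filter_imp (fun u => -1 < u)). 2: now apply Ho.
      intros u Hu. now apply ex_RInt_Ik.
  - change (e * ?X) with (scal e X). rewrite <- (RInt_scal (V:=R_CompleteNormedModule)).
    apply RInt_ext. intros t Ht.
    rewrite Rmin_left, Rmax_right in Ht by lra.
    apply is_derive_unique. apply Ik_integrand_derive. apply pos_1tw; lra.
    now apply ex_RInt_Ik.
Qed.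

Lemma Ik_pos k e w : -1 < w -> 0 < Ik k e w.
Proof.
  intros Hw. unfold Ik. apply RInt_gt_0. lra.
  - intros t Ht. apply Rmult_lt_0_compat. apply pow_lt; lra. apply Rpower_gt0.
  - intros t Ht. apply Ik_integrand_cont. apply pos_1tw; lra.
Qed.

Definition Phi (c w : R) := c * Ik 0 (c - 1) w.
Definition dPhi (c w : R) := c * ((c - 1) * Ik 1 (c - 1 - 1) w).

Lemma Phi_deriv c w : -1 < w -> is_derive (Phi c) w (dPhi c w).
Proof.
  intros Hw. unfold Phi, dPhi. apply (is_derive_scal (fun w => Ik 0 (c - 1) w)).
  now apply Ik_deriv.
Qed.

Lemma Phi_cont c w : -1 < w -> continuity_pt (Phi c) w.
Proof. intros Hw. apply cont_of_derive. eexists. now apply Phi_deriv. Qed.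

Lemma dPhi_cont c w : -1 < w -> continuity_pt (dPhi c) w.
Proof.
  intros Hw. apply cont_of_derive. unfold dPhi. eexists.
  apply (is_derive_scal (fun w => (c - 1) * Ik 1 (c - 1 - 1) w)).
  apply (is_derive_scal (fun w => Ik 1 (c - 1 - 1) w)). now apply Ik_deriv.
Qed.

Lemma Phi_pos c w : 0 < c -> -1 < w -> 0 < Phi c w.
Proof. intros. unfold Phi. apply Rmult_lt_0_compat; auto. now apply Ik_pos. Qed.

Lemma dPhi_pos c w : 1 < c -> -1 < w -> 0 < dPhi c w.
Proof.
  intros. unfold dPhi. apply Rmult_lt_0_compat. lra.
  apply Rmult_lt_0_compat. lra. now apply Ik_pos.
Qed.

Lemma dPhi_neg c w : 0 < c < 1 -> -1 < w -> dPhi c w < 0.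
Proof.
  intros. unfold dPhi. assert (0 < Ik 1 (c - 1 - 1) w) by now apply Ik_pos.
  assert (0 < (1 - c) * Ik 1 (c - 1 - 1) w) by (apply Rmult_lt_0_compat; lra).
  nra.
Qed.

Lemma Rpower_1_base x : Rpower 1 x = 1.
Proof. unfold Rpower. rewrite ln_1, Rmult_0_r. apply exp_0. Qed.

Lemma pow_identity c w : -1 < w -> Rpower (1 + w) c - 1 = w * Phi c w.
Proof.
  intros Hw.
  assert (HD : forall t, 0 <= t <= 1 ->
     is_derive (fun t => Rpower (1 + t * w) c) t (w * (c * Rpower (1 + t * w) (c - 1)))).
  { intros t Ht. apply (is_derive_comp (fun y => Rpower y c) (fun t => 1 + t * w)).
    apply is_derive_Rpower. apply pos_1tw; lra.
    auto_derive. auto. ring. }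
  assert (HI := is_RInt_derive (V:=R_CompleteNormedModule) (fun t => Rpower (1 + t * w) c)
     (fun t => w * (c * Rpower (1 + t * w) (c - 1))) 0 1).
  rewrite Rmin_left, Rmax_right in HI by lra.
  specialize (HI HD).
  assert (HC : forall x, 0 <= x <= 1 -> continuous (fun t => w * (c * Rpower (1 + t * w) (c - 1))) x).
  { intros x Hx. apply (ex_derive_continuous (K:=R_AbsRing) (V:=R_NormedModule)).
    assert (0 < 1 + x * w) by (apply pos_1tw; lra). unfold Rpower. auto_derive. lra. }
  specialize (HI HC). apply is_RInt_unique in HI.
  simpl in HI. unfold minus, plus, opp in HI; simpl in HI.
  rewrite Rmult_0_l, Rplus_0_r, Rmult_1_l, Rpower_1_base in HI.
  unfold Rminus. rewrite <- HI. unfold Phi, Ik.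
  rewrite (RInt_ext (V:=R_CompleteNormedModule) (fun t => w * (c * Rpower (1 + t * w) (c - 1)))
    (fun t => scal (w * c) (t ^ 0 * Rpower (1 + t * w) (c - 1)))).
  2:{ intros. change (scal (w * c) ?X) with ((w * c) * X). simpl. ring. }
  rewrite (RInt_scal (V:=R_CompleteNormedModule)). 
  change (scal (w * c) ?X) with ((w * c) * X). ring. now apply ex_RInt_Ik.
Qed.

Lemma c_gt1 q : 0 < q -> q < 2 -> 1 < 2 / q.
Proof. intros. assert (2 / q * q = 2) by (field; lra). nra. Qed.
Lemma c_lt1 q : 0 < q -> 2 < q -> 0 < 2 / q < 1.
Proof. intros. assert (2 / q * q = 2) by (field; lra). split; nra. Qed.

Definition aJ (z s : R) := (1 - z ^ 2) / (z + s) ^ 2.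

Lemma Jtilde_eq q s z : 0 < z + s -> -1 < z < 1 ->
  Jtilde_mq q s z = (1 - z ^ 2) * Phi (2 / q) (aJ z s).
Proof.
  intros Hs Hz. unfold Jtilde_mq.
  assert (Ha : 0 <= aJ z s).
  { unfold aJ. apply Rmult_le_pos. nra. apply Rlt_le, Rinv_0_lt_compat. nra. }
  replace (Kfun s z) with (1 + aJ z s).
  2:{ unfold Kfun, aJ. field. lra. }
  rewrite pow_identity by lra. unfold aJ. field. lra.
Qed.

Lemma Jderiv q t z : 0 < q -> 1 < t -> -1 < z < 1 ->
  is_derive (fun s => Jtilde_mq q s z) t
    ((1 - z ^ 2) * ((- 2 * (1 - z ^ 2) / (z + t) ^ 3) * dPhi (2 / q) (aJ z t))).
Proof.
  intros Hq Ht Hz.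
  apply (is_derive_ext_loc (fun s => (1 - z ^ 2) * Phi (2 / q) (aJ z s))).
  { assert (Ho : open (fun s => - z < s)) by apply open_gt.
    apply (filter_imp (fun s => - z < s)). 2: apply Ho; lra.
    intros s Hs. symmetry. apply Jtilde_eq; lra. }
  apply (is_derive_scal (fun s => Phi (2 / q) (aJ z s))).
  apply (is_derive_comp (Phi (2 / q)) (aJ z)).
  - apply Phi_deriv. unfold aJ. 
    assert (0 <= (1 - z ^ 2) / (z + t) ^ 2).
    { apply Rmult_le_pos. nra. apply Rlt_le, Rinv_0_lt_compat. nra. } lra.
  - unfold aJ. auto_derive. nra. field. lra.
Qed.

Theorem part1 (q : R) (hq : 0 < q) :
  forall t z : R, 1 < t -> -1 < z < 1 ->
     (q < 2 -> exists l : R, is_derive (fun s => Jtilde_mq q s z) t l /\ l < 0) /\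
     (2 < q -> exists l : R, is_derive (fun s => Jtilde_mq q s z) t l /\ 0 < l).
Proof.
  intros t z Ht Hz.
  assert (Ha : -1 < aJ z t).
  { unfold aJ. assert (0 <= (1 - z ^ 2) / (z + t) ^ 2).
    { apply Rmult_le_pos. nra. apply Rlt_le, Rinv_0_lt_compat. nra. } lra. }
  assert (Hn : - 2 * (1 - z ^ 2) / (z + t) ^ 3 < 0).
  { unfold Rdiv. assert (0 < / (z + t) ^ 3) by (apply Rinv_0_lt_compat; apply pow_lt; lra).
    assert (0 < (2 * (1 - z ^ 2)) * / (z + t) ^ 3) by (apply Rmult_lt_0_compat; nra).
    replace (- 2 * (1 - z ^ 2) * / (z + t) ^ 3) with (- ((2 * (1 - z ^ 2)) * / (z + t) ^ 3)) by ring. lra. }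
  assert (H1 : 0 < 1 - z ^ 2) by nra.
  split; intros Hq2; eexists; split; try apply Jderiv; try lra.
  - assert (0 < dPhi (2 / q) (aJ z t)) by (apply dPhi_pos; auto; apply c_gt1; auto).
    assert (0 < (- (- 2 * (1 - z ^ 2) / (z + t) ^ 3)) * dPhi (2 / q) (aJ z t)) by (apply Rmult_lt_0_compat; lra).
    nra.
  - assert (dPhi (2 / q) (aJ z t) < 0) by (apply dPhi_neg; auto; apply c_lt1; auto).
    assert (0 < (- (- 2 * (1 - z ^ 2) / (z + t) ^ 3)) * - dPhi (2 / q) (aJ z t)) by (apply Rmult_lt_0_compat; lra).
    nra.
Qed.

Definition Pf s φ := 1 + (s - 1) * sin φ ^ 2.
Definition Bf s φ := (s - 1) * sin φ * cos φ / Pf s φ.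
Definition Wf s φ := Bf s φ ^ 2.
Definition dWf s φ := 2 * Bf s φ * (sin φ * cos φ / Pf s φ ^ 2).
Definition gf q s φ := 2 / q * / sqrt (Phi (2 / q) (Wf s φ)).
Definition dgf q s φ := 2 / q * ((dWf s φ * dPhi (2 / q) (Wf s φ)) *
   (- / (2 * Phi (2 / q) (Wf s φ) * sqrt (Phi (2 / q) (Wf s φ))))).
Definition Tf q s := RInt (gf q s) 0 (PI / 2).

Lemma Pf_pos s φ : 0 < s -> 0 < Pf s φ.
Proof.
  intros Hs. unfold Pf. assert (H := sin2 φ). assert (0 <= cos φ ^ 2) by (apply pow2_ge_0).
  assert (0 <= sin φ ^ 2) by (apply pow2_ge_0). unfold Rsqr in H.
  destruct (Rle_dec 1 s). nra. nra.
Qed.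

Lemma Wf_nonneg s φ : 0 <= Wf s φ.
Proof. unfold Wf. apply pow2_ge_0. Qed.

Lemma Wf_gt s φ : -1 < Wf s φ.
Proof. generalize (Wf_nonneg s φ). lra. Qed.

Lemma is_derive_invsqrt y : 0 < y -> is_derive (fun y => / sqrt y) y (- / (2 * y * sqrt y)).
Proof.
  intros Hy. assert (0 < sqrt y) by (apply sqrt_lt_R0; lra).
  auto_derive. lra. field_simplify. 2: split; lra. 
  replace (sqrt y ^ 3) with (sqrt y * sqrt y * sqrt y) by ring. rewrite sqrt_sqrt by lra. field. split; lra. lra.
Qed.

Lemma Wf_deriv s φ : 0 < s -> is_derive (fun u => Wf u φ) s (dWf s φ).
Proof.
  intros Hs. assert (Hp := Pf_pos s φ Hs). unfold dWf, Wf, Bf, Pf in *.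
  auto_derive. lra. field. lra.
Qed.

Lemma gf_deriv q s φ : 0 < q -> 0 < s -> is_derive (fun u => gf q u φ) s (dgf q s φ).
Proof.
  intros Hq Hs. unfold gf, dgf.
  apply (is_derive_scal (fun u => / sqrt (Phi (2 / q) (Wf u φ)))).
  apply (is_derive_comp (fun y => / sqrt y) (fun u => Phi (2 / q) (Wf u φ))).
  - apply is_derive_invsqrt. apply Phi_pos. apply Rdiv_lt_0_compat; lra. apply Wf_gt.
  - apply (is_derive_comp (Phi (2 / q)) (fun u => Wf u φ)).
    apply Phi_deriv. apply Wf_gt. now apply Wf_deriv.
Qed.

Ltac c2d :=
  repeat (cbv beta; match goal with
  | |- continuity_2d_pt (fun u v => u) _ _ => apply continuity_2d_pt_id1
  | |- continuity_2d_pt (fun u v => v) _ _ => apply continuity_2d_pt_id2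
  | |- continuity_2d_pt (fun u v => ?c) _ _ => apply continuity_2d_pt_const
  | |- continuity_2d_pt (fun u v => @?f u v + @?g u v) _ _ => apply (continuity_2d_pt_plus f g)
  | |- continuity_2d_pt (fun u v => @?f u v - @?g u v) _ _ => apply (continuity_2d_pt_minus f g)
  | |- continuity_2d_pt (fun u v => @?f u v * @?g u v) _ _ => apply (continuity_2d_pt_mult f g)
  | |- continuity_2d_pt (fun u v => @?f u v / @?g u v) _ _ =>
      apply (continuity_2d_pt_ext (fun u v => f u v * / g u v)); [intros; reflexivity|]
  | |- continuity_2d_pt (fun u v => - @?f u v) _ _ => apply (continuity_2d_pt_opp f)
  | |- continuity_2d_pt (fun u v => / @?f u v) _ _ => apply (continuity_2d_pt_inv f)
  | |- continuity_2d_pt (fun u v => sin (@?f u v)) _ _ =>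
      apply (continuity_1d_2d_pt_comp sin f); [apply continuity_sin|]
  | |- continuity_2d_pt (fun u v => cos (@?f u v)) _ _ =>
      apply (continuity_1d_2d_pt_comp cos f); [apply continuity_cos|]
  | |- continuity_2d_pt (fun u v => (@?f u v) ^ ?n) _ _ =>
      apply (continuity_1d_2d_pt_comp (fun y => y ^ n) f); [apply cont_of_derive; auto_derive; auto|]
  | |- continuity_2d_pt (fun u v => sqrt (@?f u v)) _ _ =>
      apply (continuity_1d_2d_pt_comp sqrt f); [apply continuity_pt_sqrt|]
  | |- continuity_2d_pt (fun u v => Phi ?c (@?f u v)) _ _ =>
      apply (continuity_1d_2d_pt_comp (Phi c) f); [apply Phi_cont|]
  | |- continuity_2d_pt (fun u v => dPhi ?c (@?f u v)) _ _ =>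
      apply (continuity_1d_2d_pt_comp (dPhi c) f); [apply dPhi_cont|]
  end).

Lemma c2d_Wf s φ : 0 < s -> continuity_2d_pt Wf s φ.
Proof.
  intros Hs.
  apply (continuity_2d_pt_ext (fun u v => ((u - 1) * sin v * cos v / (1 + (u - 1) * sin v ^ 2)) ^ 2)).
  reflexivity. c2d. cbv beta. apply Rgt_not_eq, Pf_pos; auto.
Qed.

Lemma c2d_dWf s φ : 0 < s -> continuity_2d_pt dWf s φ.
Proof.
  intros Hs.
  apply (continuity_2d_pt_ext (fun u v => 2 * ((u - 1) * sin v * cos v / (1 + (u - 1) * sin v ^ 2)) *
     (sin v * cos v / (1 + (u - 1) * sin v ^ 2) ^ 2))).
  reflexivity. c2d; cbv beta; try apply pow_nonzero; apply Rgt_not_eq, Pf_pos; auto.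
Qed.

Lemma cq q : 0 < q -> 0 < 2 / q.
Proof. intros; apply Rdiv_lt_0_compat; lra. Qed.

Lemma c2d_gf q s φ : 0 < q -> 0 < s -> continuity_2d_pt (gf q) s φ.
Proof.
  intros Hq Hs. unfold gf.
  assert (HP := Phi_pos (2 / q) (Wf s φ) (cq q Hq) (Wf_gt s φ)).
  c2d; cbv beta; try apply Wf_gt; try (now apply c2d_Wf); try lra;
   try (apply Rgt_not_eq, sqrt_lt_R0; auto).
Qed.

Lemma c2d_dgf q s φ : 0 < q -> 0 < s -> continuity_2d_pt (dgf q) s φ.
Proof.
  intros Hq Hs. unfold dgf.
  assert (HP := Phi_pos (2 / q) (Wf s φ) (cq q Hq) (Wf_gt s φ)).
  assert (0 < sqrt (Phi (2 / q) (Wf s φ))) by (apply sqrt_lt_R0; auto).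
  c2d; cbv beta; try apply Wf_gt; try (now apply c2d_Wf); try (now apply c2d_dWf); try lra.
  apply Rgt_not_eq. apply Rmult_lt_0_compat; auto. lra.
Qed.

Lemma gf_cont q s φ : 0 < q -> 0 < s -> continuous (gf q s) φ.
Proof. intros. apply (c2d_snd (gf q)). now apply c2d_gf. Qed.

Lemma dgf_cont q s φ : 0 < q -> 0 < s -> continuous (dgf q s) φ.
Proof. intros. apply (c2d_snd (dgf q)). now apply c2d_dgf. Qed.

Lemma ex_RInt_gf q s a b : 0 < q -> 0 < s -> ex_RInt (gf q s) a b.
Proof. intros. apply (ex_RInt_continuous (V:=R_CompleteNormedModule)). intros; now apply gf_cont. Qed.

Lemma Tf_deriv q s : 0 < q -> 0 < s -> is_derive (Tf q) s (RInt (dgf q s) 0 (PI / 2)).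
Proof.
  intros Hq Hs. unfold Tf.
  replace (RInt (dgf q s) 0 (PI / 2)) with (RInt (fun t => Derive (fun u => gf q u t) s) 0 (PI / 2)).
  - apply (is_derive_RInt_param (fun u t => gf q u t)).
    + assert (Ho : open (fun u => 0 < u)) by apply open_gt.
      apply (filter_imp (fun u => 0 < u)). 2: now apply Ho.
      intros u Hu t Ht. eexists. now apply gf_deriv.
    + intros t Ht. apply (continuity_2d_pt_ext_loc (dgf q)). 2: now apply c2d_dgf.
      exists (mkposreal s Hs). intros u v Hu Hv. simpl in Hu.
      symmetry. apply is_derive_unique. apply gf_deriv; auto.
      apply Rabs_def2 in Hu. lra.
    + assert (Ho : open (fun u => 0 < u)) by apply open_gt.
      apply (filter_imp (fun u => 0 < u)). 2: now apply Ho.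
      intros u Hu. now apply ex_RInt_gf.
  - apply RInt_ext. intros. apply is_derive_unique. now apply gf_deriv.
Qed.

Lemma dWf_pos s φ : 1 < s -> 0 < φ < PI / 2 -> 0 < dWf s φ.
Proof.
  intros Hs Hp. assert (Hsn : 0 < sin φ) by (apply sin_gt_0; lra).
  assert (Hcs : 0 < cos φ) by (apply cos_gt_0; lra).
  assert (HP := Pf_pos s φ ltac:(lra)).
  unfold dWf, Bf. assert (0 < sin φ * cos φ) by nra.
  assert (0 < (s - 1) * (sin φ * cos φ)) by nra.
  assert (0 < / Pf s φ) by (apply Rinv_0_lt_compat; auto).
  assert (0 < / Pf s φ ^ 2) by (apply Rinv_0_lt_compat; apply pow_lt; auto).
  unfold Rdiv. repeat apply Rmult_lt_0_compat; try lra; auto.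
Qed.

Lemma dgf_sign q s φ : 0 < q -> 1 < s -> 0 < φ < PI / 2 ->
  (q < 2 -> dgf q s φ < 0) /\ (2 < q -> 0 < dgf q s φ).
Proof.
  intros Hq Hs Hp. unfold dgf.
  assert (HW := dWf_pos s φ Hs Hp).
  assert (HP := Phi_pos (2 / q) (Wf s φ) (cq q Hq) (Wf_gt s φ)).
  assert (0 < sqrt (Phi (2 / q) (Wf s φ))) by (apply sqrt_lt_R0; auto).
  assert (Hd : 0 < / (2 * Phi (2 / q) (Wf s φ) * sqrt (Phi (2 / q) (Wf s φ)))).
  { apply Rinv_0_lt_compat. apply Rmult_lt_0_compat; [apply Rmult_lt_0_compat|]; lra. }
  assert (Hc := cq q Hq).
  split; intros Hq2.
  - assert (0 < dPhi (2 / q) (Wf s φ)) by (apply dPhi_pos; [apply c_gt1; auto | apply Wf_gt]).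
    assert (0 < 2 / q * ((dWf s φ * dPhi (2 / q) (Wf s φ)) *
       (/ (2 * Phi (2 / q) (Wf s φ) * sqrt (Phi (2 / q) (Wf s φ)))))).
    { apply Rmult_lt_0_compat; auto. apply Rmult_lt_0_compat; auto. apply Rmult_lt_0_compat; auto. }
    lra.
  - assert (dPhi (2 / q) (Wf s φ) < 0) by (apply dPhi_neg; [apply c_lt1; auto | apply Wf_gt]).
    assert (0 < 2 / q * ((dWf s φ * - dPhi (2 / q) (Wf s φ)) *
       (/ (2 * Phi (2 / q) (Wf s φ) * sqrt (Phi (2 / q) (Wf s φ)))))).
    { apply Rmult_lt_0_compat; auto. apply Rmult_lt_0_compat; auto. apply Rmult_lt_0_compat; auto; lra. }
    lra.
Qed.

Lemma Tf_deriv_sign q s : 0 < q -> 1 < s ->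
  (q < 2 -> RInt (dgf q s) 0 (PI / 2) < 0) /\ (2 < q -> 0 < RInt (dgf q s) 0 (PI / 2)).
Proof.
  intros Hq Hs. assert (HPI := PI2_RGT_0).
  assert (E : RInt (fun _ : R => 0) 0 (PI / 2) = 0).
  { rewrite (RInt_const (V:=R_CompleteNormedModule)). apply (scal_zero_r (K:=R_AbsRing) (V:=R_NormedModule)). }
  split; intros Hq2.
  - enough (RInt (dgf q s) 0 (PI / 2) < RInt (fun _ => 0) 0 (PI / 2)) by lra.
    apply RInt_lt. auto.
    + intros. apply continuous_const.
    + intros. apply dgf_cont; lra.
    + intros. now apply dgf_sign.
  - enough (RInt (fun _ => 0) 0 (PI / 2) < RInt (dgf q s) 0 (PI / 2)) by lra.
    apply RInt_lt. auto.
    + intros. apply dgf_cont; lra.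
    + intros. apply continuous_const.
    + intros. now apply dgf_sign.
Qed.

Definition xm q s φ := Rpower (Pf s φ) (1 / q).
Definition dxm q s φ := 1 / q * Rpower (Pf s φ) (1 / q - 1) * ((s - 1) * (2 * sin φ * cos φ)).

Lemma xm_deriv q s φ : 0 < s -> is_derive (xm q s) φ (dxm q s φ).
Proof.
  intros Hs. unfold xm, dxm.
  assert (H1 : is_derive (fun y => Rpower y (1 / q)) (Pf s φ) (1 / q * Rpower (Pf s φ) (1 / q - 1))).
  { apply is_derive_Rpower. now apply Pf_pos. }
  assert (H2 : is_derive (fun φ => Pf s φ) φ ((s - 1) * (2 * sin φ * cos φ))).
  { unfold Pf. auto_derive. auto. ring. }
  pose proof (is_derive_comp _ _ _ _ _ H1 H2) as H. simpl in H.
  change (scal ?a ?b) with (a * b) in H.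
  replace (1 / q * Rpower (Pf s φ) (1 / q - 1) * ((s - 1) * (2 * sin φ * cos φ)))
    with ((s - 1) * (2 * sin φ * cos φ) * (1 / q * Rpower (Pf s φ) (1 / q - 1))) by ring.
  exact H.
Qed.

Lemma dxm_cont q s φ : 0 < s -> continuous (dxm q s) φ.
Proof.
  intros Hs. apply (ex_derive_continuous (K:=R_AbsRing) (V:=R_NormedModule)).
  assert (H := Pf_pos s φ Hs). unfold dxm, Pf in *. unfold Rpower. auto_derive. auto.
Qed.

Lemma Rpower_r_mq r q : 1 < r -> Rpower r (- q) = / Rpower r q.
Proof. intros. apply Rpower_Ropp. Qed.

Lemma coefA r q : 1 < r -> 0 < q ->
  (Rpower r (- q) - Rpower r q) / (Rpower r (- q) - 1) = Rpower r q + 1.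
Proof.
  intros Hr Hq. rewrite Rpower_Ropp.
  assert (1 < Rpower r q).
  { rewrite <- (Rpower_O r) by lra. apply Rpower_lt; lra. }
  assert (/ Rpower r q < 1). { rewrite <- Rinv_1. apply Rinv_lt_contravar; lra. }
  field. split; lra.
Qed.

Lemma coefB r q : 1 < r -> 0 < q ->
  (Rpower r q - 1) / (Rpower r (- q) - 1) = - Rpower r q.
Proof.
  intros Hr Hq. rewrite Rpower_Ropp.
  assert (1 < Rpower r q).
  { rewrite <- (Rpower_O r) by lra. apply Rpower_lt; lra. }
  assert (/ Rpower r q < 1). { rewrite <- Rinv_1. apply Rinv_lt_contravar; lra. }
  field. split; lra.
Qed.

Lemma one_plus_W s φ : 0 < s ->
  1 + Wf s φ = (s * Pf s φ + Pf s φ - s) / Pf s φ ^ 2.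
Proof.
  intros Hs. assert (HP := Pf_pos s φ Hs). unfold Wf, Bf.
  assert (H2 := sin2_cos2 φ). unfold Rsqr in H2.
  assert (Hc2 : cos φ ^ 2 = 1 - sin φ ^ 2) by (simpl; lra).
  replace (((s - 1) * sin φ * cos φ / Pf s φ) ^ 2) with ((s - 1) ^ 2 * sin φ ^ 2 * cos φ ^ 2 / Pf s φ ^ 2)
    by (field; lra).
  rewrite Hc2. unfold Pf in *. field. lra.
Qed.

Lemma s_gt1 r q : 1 < r -> 0 < q -> 1 < Rpower r q.
Proof. intros. rewrite <- (Rpower_O r) by lra. apply Rpower_lt; lra. Qed.

Lemma Bf_pos s φ : 1 < s -> 0 < φ < PI / 2 -> 0 < Bf s φ.
Proof.
  intros Hs Hp. assert (Hsn : 0 < sin φ) by (apply sin_gt_0; lra).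
  assert (Hcs : 0 < cos φ) by (apply cos_gt_0; lra).
  assert (HP := Pf_pos s φ ltac:(lra)). unfold Bf, Rdiv.
  apply Rmult_lt_0_compat. 2: now apply Rinv_0_lt_compat.
  apply Rmult_lt_0_compat; [apply Rmult_lt_0_compat|]; lra.
Qed.

Section Fix.
Variables (q r : R).
Hypothesis (Hq : 0 < q) (Hr : 1 < r).
Let s := Rpower r q.

Lemma inner_eq φ : 0 < φ < PI / 2 ->
  (Rpower r (- q) - Rpower r q) / (Rpower r (- q) - 1) +
  (Rpower r q - 1) / (Rpower r (- q) - 1) * Rpower (xm q s φ) (- q)
  = Pf s φ * (1 + Wf s φ).
Proof.
  intros Hp. assert (Hs : 1 < s) by (apply s_gt1; auto).
  assert (HP := Pf_pos s φ ltac:(lra)).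
  rewrite coefA, coefB by auto. fold s.
  rewrite Rpower_Ropp. unfold xm. rewrite Rpower_mult.
  replace (1 / q * q) with 1 by (field; lra). rewrite Rpower_1 by auto.
  rewrite one_plus_W by lra. field. lra.
Qed.

Lemma sqarg_eq φ : 0 < φ < PI / 2 ->
  Rpower ((Rpower r (- q) - Rpower r q) / (Rpower r (- q) - 1) +
  (Rpower r q - 1) / (Rpower r (- q) - 1) * Rpower (xm q s φ) (- q)) (2 / q) - xm q s φ ^ 2
  = Rpower (Pf s φ) (2 / q) * (Wf s φ * Phi (2 / q) (Wf s φ)).
Proof.
  intros Hp. assert (Hs : 1 < s) by (apply s_gt1; auto).
  assert (HP := Pf_pos s φ ltac:(lra)).
  rewrite inner_eq by auto.
  rewrite <- Rpower_mult_distr by (auto; generalize (Wf_nonneg s φ); lra).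
  rewrite <- pow_identity by apply Wf_gt.
  replace (xm q s φ ^ 2) with (Rpower (Pf s φ) (2 / q)).
  ring. unfold xm. simpl. rewrite Rmult_1_r, <- Rpower_plus. f_equal. field. lra.
Qed.

Lemma sqarg_pos φ : 0 < φ < PI / 2 ->
  0 < Rpower (Pf s φ) (2 / q) * (Wf s φ * Phi (2 / q) (Wf s φ)).
Proof.
  intros Hp. assert (Hs : 1 < s) by (apply s_gt1; auto).
  apply Rmult_lt_0_compat. apply Rpower_gt0.
  apply Rmult_lt_0_compat. unfold Wf. apply pow_lt. now apply Bf_pos.
  apply Phi_pos. now apply cq. apply Wf_gt.
Qed.

Lemma integrand_at φ : 0 < φ < PI / 2 ->
  Theta_integrand (- q) q r (xm q s φ) =
  / (Rpower (Pf s φ) (1 / q) * Bf s φ * sqrt (Phi (2 / q) (Wf s φ))).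
Proof.
  intros Hp. assert (Hs : 1 < s) by (apply s_gt1; auto).
  assert (HB := Bf_pos s φ Hs Hp).
  assert (HPh := Phi_pos (2 / q) (Wf s φ) (cq q Hq) (Wf_gt s φ)).
  unfold Theta_integrand. rewrite sqarg_eq by auto. f_equal.
  rewrite sqrt_mult_alt by (apply Rlt_le, Rpower_gt0).
  rewrite sqrt_mult_alt by (unfold Wf; apply pow2_ge_0).
  unfold Wf. rewrite sqrt_pow2 by lra.
  replace (Rpower (Pf s φ) (2 / q)) with (Rpower (Pf s φ) (1 / q) ^ 2).
  rewrite sqrt_pow2 by (apply Rlt_le, Rpower_gt0). ring.
  simpl. rewrite Rmult_1_r, <- Rpower_plus. f_equal. field. lra.
Qed.

Lemma subst_eq φ : 0 < φ < PI / 2 ->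
  dxm q s φ * Theta_integrand (- q) q r (xm q s φ) = gf q s φ.
Proof.
  intros Hp. assert (Hs : 1 < s) by (apply s_gt1; auto).
  assert (HB := Bf_pos s φ Hs Hp).
  assert (HPh := Phi_pos (2 / q) (Wf s φ) (cq q Hq) (Wf_gt s φ)).
  assert (Hsq : 0 < sqrt (Phi (2 / q) (Wf s φ))) by (apply sqrt_lt_R0; auto).
  assert (Hsn : 0 < sin φ) by (apply sin_gt_0; lra).
  assert (Hcs : 0 < cos φ) by (apply cos_gt_0; lra).
  assert (HP := Pf_pos s φ ltac:(lra)).
  assert (HR := Rpower_gt0 (Pf s φ) (1 / q)).
  rewrite integrand_at by auto. unfold dxm, gf. rewrite Rpower_m1 by auto.
  unfold Bf. field. repeat split; lra.
Qed.

End Fix.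

Lemma xm_pos q s φ : 0 < xm q s φ.
Proof. apply Rpower_gt0. Qed.

Lemma f_cont q r φ : 0 < q -> 1 < r -> 0 < φ < PI / 2 ->
  continuous (Theta_integrand (- q) q r) (xm q (Rpower r q) φ).
Proof.
  intros Hq Hr Hp.
  assert (H1 := inner_eq q r Hq Hr φ Hp).
  assert (H2 := sqarg_eq q r Hq Hr φ Hp).
  assert (H3 := sqarg_pos q r Hq Hr φ Hp).
  assert (Hs : 1 < Rpower r q) by (apply s_gt1; auto).
  assert (H4 : 0 < Pf (Rpower r q) φ * (1 + Wf (Rpower r q) φ)).
  { apply Rmult_lt_0_compat. apply Pf_pos; lra. generalize (Wf_nonneg (Rpower r q) φ); lra. }
  rewrite <- H1 in H4. rewrite <- H2 in H3.
  assert (H5 := xm_pos q (Rpower r q) φ).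
  set (x := xm q (Rpower r q) φ) in *. clearbody x.
  set (A := (Rpower r (- q) - Rpower r q) / (Rpower r (- q) - 1)) in *.
  set (B := (Rpower r q - 1) / (Rpower r (- q) - 1)) in *.
  apply (ex_derive_continuous (K:=R_AbsRing) (V:=R_NormedModule)).
  unfold Theta_integrand. fold A B.
  unfold Rpower in *. auto_derive.
  replace (x * (x * 1)) with (x ^ 2) by ring.
  repeat split; try lra. apply Rgt_not_eq, sqrt_lt_R0. lra.
Qed.

Section Inv.
Variables (q r : R).
Hypothesis (Hq : 0 < q) (Hr : 1 < r).
Let s := Rpower r q.
Definition uinv a := (Rpower a q - 1) / (Rpower r q - 1).
Definition phinv a := asin (sqrt (uinv a)).

Lemma Rpower_inv_q x : 0 < x -> Rpower (Rpower x q) (1 / q) = x.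
Proof. intros. rewrite Rpower_mult. replace (q * (1 / q)) with 1 by (field; lra). now apply Rpower_1. Qed.

Lemma Rpower_q_inv x : 0 < x -> Rpower (Rpower x (1 / q)) q = x.
Proof. intros. rewrite Rpower_mult. replace (1 / q * q) with 1 by (field; lra). now apply Rpower_1. Qed.

Lemma uinv_bounds a : 1 < a < r -> 0 < uinv a < 1.
Proof.
  intros Ha. assert (Hs : 1 < s) by (apply s_gt1; auto).
  assert (H1 : 1 < Rpower a q) by (apply s_gt1; lra).
  assert (H2 : Rpower a q < s) by (apply Rlt_Rpower_l; lra).
  unfold uinv. fold s. split.
  apply Rdiv_lt_0_compat; lra.
  apply (Rmult_lt_reg_r (s - 1)). lra. unfold Rdiv. rewrite Rmult_assoc, Rinv_l by lra. lra.
Qed.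

Lemma sqrt_uinv_bounds a : 1 < a < r -> 0 < sqrt (uinv a) < 1.
Proof.
  intros Ha. assert (H := uinv_bounds a Ha). split.
  apply sqrt_lt_R0; lra. rewrite <- sqrt_1. apply sqrt_lt_1_alt; lra.
Qed.

Lemma phinv_bounds a : 1 < a < r -> 0 < phinv a < PI / 2.
Proof.
  intros Ha. assert (H := sqrt_uinv_bounds a Ha). unfold phinv.
  assert (Hb := asin_bound_lt (sqrt (uinv a)) ltac:(lra)). split. 2: lra.
  apply sin_increasing_0; try lra. rewrite sin_0, sin_asin; lra.
Qed.

Lemma sin_phinv a : 1 < a < r -> sin (phinv a) = sqrt (uinv a).
Proof. intros Ha. assert (H := sqrt_uinv_bounds a Ha). unfold phinv. rewrite sin_asin; lra. Qed.

Lemma xm_phinv a : 1 < a < r -> xm q s (phinv a) = a.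
Proof.
  intros Ha. assert (Hs : 1 < s) by (apply s_gt1; auto).
  assert (H := uinv_bounds a Ha).
  unfold xm, Pf. rewrite sin_phinv by auto.
  replace (sqrt (uinv a) ^ 2) with (uinv a) by (simpl; rewrite Rmult_1_r, sqrt_sqrt; lra).
  unfold uinv. fold s. replace (1 + (s - 1) * ((Rpower a q - 1) / (s - 1))) with (Rpower a q)
    by (field; lra).
  apply Rpower_inv_q; lra.
Qed.

Lemma xm_gt1 e : 0 < e < PI / 2 -> 1 < xm q s e.
Proof.
  intros He. assert (Hs : 1 < s) by (apply s_gt1; auto).
  assert (Hsn : 0 < sin e) by (apply sin_gt_0; lra).
  unfold xm, Pf. apply Rle_lt_trans with (Rpower 1 (1 / q)). rewrite Rpower_1_base; lra.
  apply Rlt_Rpower_l. apply Rdiv_lt_0_compat; lra.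
  split. lra. assert (0 < sin e ^ 2) by (apply pow_lt; lra). nra.
Qed.

Lemma xm_ltr e : 0 < e < PI / 2 -> xm q s e < r.
Proof.
  intros He. assert (Hs : 1 < s) by (apply s_gt1; auto).
  assert (Hsn : 0 < sin e) by (apply sin_gt_0; lra).
  assert (Hcs : 0 < cos e) by (apply cos_gt_0; lra).
  assert (H2 := sin2_cos2 e). unfold Rsqr in H2.
  assert (sin e ^ 2 < 1) by (simpl; nra).
  unfold xm, Pf. rewrite <- (Rpower_inv_q r) by lra. fold s.
  apply Rlt_Rpower_l. apply Rdiv_lt_0_compat; lra.
  split. assert (0 <= sin e ^ 2) by (apply pow2_ge_0). nra. nra.
Qed.

Lemma phinv_small a e : 1 < a < r -> 0 < e < PI / 2 -> a < xm q s e -> phinv a < e.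
Proof.
  intros Ha He Hae. assert (Hs : 1 < s) by (apply s_gt1; auto).
  assert (Hsn : 0 < sin e) by (apply sin_gt_0; lra).
  assert (Hb := phinv_bounds a Ha).
  apply sin_increasing_0; try lra. rewrite sin_phinv by auto.
  assert (H1 : Rpower a q < Pf s e).
  { rewrite <- (Rpower_q_inv (Pf s e)) by (apply Pf_pos; lra). apply Rlt_Rpower_l; [lra | split; [lra | exact Hae]]. }
  rewrite <- (sqrt_pow2 (sin e)) by lra. apply sqrt_lt_1_alt.
  assert (H := uinv_bounds a Ha). split. lra.
  unfold uinv. fold s. unfold Pf in H1.
  apply (Rmult_lt_reg_r (s - 1)). lra. unfold Rdiv. rewrite Rmult_assoc, Rinv_l by lra. nra.
Qed.

Lemma phinv_big b e : 1 < b < r -> 0 < e < PI / 2 -> xm q s e < b -> e < phinv b.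
Proof.
  intros Ha He Hae. assert (Hs : 1 < s) by (apply s_gt1; auto).
  assert (Hsn : 0 < sin e) by (apply sin_gt_0; lra).
  assert (Hb := phinv_bounds b Ha).
  apply sin_increasing_0; try lra. rewrite sin_phinv by auto.
  assert (H1 : Pf s e < Rpower b q).
  { rewrite <- (Rpower_q_inv (Pf s e)) by (apply Pf_pos; lra). apply Rlt_Rpower_l; try lra.
    split. apply Rpower_gt0. exact Hae. }
  rewrite <- (sqrt_pow2 (sin e)) by lra. apply sqrt_lt_1_alt.
  assert (H := uinv_bounds b Ha). split. apply pow2_ge_0.
  unfold uinv. fold s. unfold Pf in H1.
  apply (Rmult_lt_reg_r (s - 1)). lra. unfold Rdiv. rewrite Rmult_assoc, Rinv_l by lra. nra.
Qed.

End Inv.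

Lemma ballR x (d : R) y : Rabs (y - x) < d -> ball x d y.
Proof. intros H. exact H. Qed.
Lemma ballR' x (d : R) y : ball x d y -> Rabs (y - x) < d.
Proof. intros H. exact H. Qed.

Lemma Theta_eq q r : 0 < q -> 1 < r -> Theta (- q) q r = Tf q (Rpower r q).
Proof.
  intros Hq Hr. assert (Hs : 1 < Rpower r q) by (apply s_gt1; auto).
  set (s := Rpower r q) in *.
  unfold Theta. apply is_RInt_gen_unique.
  set (f := Theta_integrand (- q) q r). set (g := gf q s).
  assert (Hcont : continuous (fun z : R * R => RInt g (fst z) (snd z)) (0, PI / 2)).
  { apply (continuous_RInt g 0 (PI / 2) (fun u v => RInt g u v)). apply filter_forall.
    intros z. apply (RInt_correct (V:=R_CompleteNormedModule)). apply ex_RInt_gf; lra. }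
  intros P [eps HP].
  assert (Hb : locally (0, PI / 2) (fun z : R * R => ball (Tf q s) eps (RInt g (fst z) (snd z)))).
  { apply Hcont. exists eps. auto. }
  destruct Hb as [d Hd].
  assert (HPI := PI2_RGT_0).
  set (e := Rmin (d / 2) (PI / 4)).
  assert (He : 0 < e <= d / 2 /\ e <= PI / 4).
  { unfold e. assert (0 < d) by apply cond_pos. split. split. apply Rmin_pos; lra. apply Rmin_l. apply Rmin_r. }
  assert (He1 := xm_gt1 q r Hq Hr e ltac:(lra)).
  assert (He2 := xm_ltr q r Hq Hr (PI / 2 - e) ltac:(lra)).
  assert (He3 := xm_ltr q r Hq Hr e ltac:(lra)).
  assert (He4 := xm_gt1 q r Hq Hr (PI / 2 - e) ltac:(lra)).
  fold s in He1, He2, He3, He4.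
  apply (Filter_prod _ _ _ (fun a => 1 < a < xm q s e) (fun b => xm q s (PI / 2 - e) < b < r)).
  - unfold at_right, within. exists (mkposreal (xm q s e - 1) ltac:(lra)).
    intros y Hy H1y. apply ballR' in Hy. simpl in Hy. apply Rabs_def2 in Hy. lra.
  - unfold at_left, within. exists (mkposreal (r - xm q s (PI / 2 - e)) ltac:(lra)).
    intros y Hy H1y. apply ballR' in Hy. simpl in Hy. apply Rabs_def2 in Hy. lra.
  - intros a b [Ha1 Ha2] [Hb1 Hb2]. simpl.
    assert (Ha : 1 < a < r) by lra. assert (Hb : 1 < b < r) by lra.
    assert (Hpa := phinv_bounds q r Hq Hr a Ha). assert (Hpb := phinv_bounds q r Hq Hr b Hb).
    assert (Hsa := phinv_small q r Hq Hr a e Ha ltac:(lra) Ha2).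
    assert (Hsb := phinv_big q r Hq Hr b (PI / 2 - e) Hb ltac:(lra) Hb1).
    exists (RInt g (phinv q r a) (phinv q r b)). split.
    + assert (exf : ex_RInt f a b).
      { apply (ex_RInt_continuous (V:=R_CompleteNormedModule)). intros z Hz.
        assert (Hz' : 1 < z < r).
        { destruct (Rle_dec a b).
          rewrite Rmin_left, Rmax_right in Hz by lra. lra.
          rewrite Rmin_right, Rmax_left in Hz by lra. lra. }
        rewrite <- (xm_phinv q r Hq Hr z Hz'). apply f_cont; auto.
        now apply phinv_bounds. }
      replace (RInt g (phinv q r a) (phinv q r b)) with (RInt f a b).
      now apply (RInt_correct (V:=R_CompleteNormedModule)).
      assert (Hy : forall y, Rmin (phinv q r a) (phinv q r b) <= y <= Rmax (phinv q r a) (phinv q r b) ->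
                0 < y < PI / 2).
      { intros y Hy. destruct (Rle_dec (phinv q r a) (phinv q r b)).
        rewrite Rmin_left, Rmax_right in Hy by lra. lra.
        rewrite Rmin_right, Rmax_left in Hy by lra. lra. }
      transitivity (RInt f (xm q s (phinv q r a)) (xm q s (phinv q r b))).
      { unfold s. rewrite (xm_phinv q r Hq Hr a Ha), (xm_phinv q r Hq Hr b Hb). reflexivity. }
      rewrite <- (RInt_comp (V:=R_CompleteNormedModule) f (xm q s) (dxm q s)).
      * apply RInt_ext. intros y Hy'. change (scal ?u ?v) with (u * v).
        unfold f, g, s. apply subst_eq; auto. apply Hy. lra.
      * intros y Hy'. unfold f, s. apply f_cont; auto.
      * intros y Hy'. split. apply xm_deriv; lra. apply dxm_cont; lra.
    + apply HP. apply (Hd (phinv q r a, phinv q r b)). split; apply ballR; simpl; apply Rabs_def1; lra.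
Qed.

Lemma Theta_deriv q r : 0 < q -> 1 < r ->
  is_derive (fun s => Theta (- q) q s) r ((q * Rpower r (q - 1)) * RInt (dgf q (Rpower r q)) 0 (PI / 2)).
Proof.
  intros Hq Hr.
  apply (is_derive_ext_loc (fun x => Tf q (Rpower x q))).
  { assert (Ho : open (fun u => 1 < u)) by apply open_gt.
    apply (filter_imp (fun u => 1 < u)). 2: now apply Ho.
    intros u Hu. symmetry. now apply Theta_eq. }
  apply (is_derive_comp (Tf q) (fun x => Rpower x q)).
  apply Tf_deriv; auto. assert (1 < Rpower r q) by (apply s_gt1; auto). lra.
  apply is_derive_Rpower. lra.
Qed.

Theorem theorem6p1 (q : R) (hq : 0 < q) :
  (forall t z : R, 1 < t -> -1 < z < 1 ->
     (q < 2 -> exists l : R, is_derive (fun s => Jtilde_mq q s z) t l /\ l < 0) /\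
     (2 < q -> exists l : R, is_derive (fun s => Jtilde_mq q s z) t l /\ 0 < l)) /\
  (forall r : R, 1 < r ->
     (q < 2 -> exists l : R, is_derive (fun s => Theta (- q) q s) r l /\ l < 0) /\
     (2 < q -> exists l : R, is_derive (fun s => Theta (- q) q s) r l /\ 0 < l)).
Proof.
  split. now apply part1.
  intros r Hr.
  assert (Hs : 1 < Rpower r q) by (apply s_gt1; auto).
  assert (Hk : 0 < q * Rpower r (q - 1)) by (apply Rmult_lt_0_compat; auto; apply Rpower_gt0).
  destruct (Tf_deriv_sign q (Rpower r q) hq Hs) as [S1 S2].
  split; intros Hq2; eexists; split; try (apply Theta_deriv; auto).
  - assert (H := S1 Hq2).
    assert (0 < (q * Rpower r (q - 1)) * - RInt (dgf q (Rpower r q)) 0 (PI / 2)) by (apply Rmult_lt_0_compat; lra).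
    lra.
  - apply Rmult_lt_0_compat; auto.
Qed.
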